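(* For each $i\in\{1,2,3,4\}$ and each $k$ there are complex numbers $\alpha_{m,i}(k)$, $m\in\mathbb Z/D\mathbb Z$, with $$q^{\epsilon_i}(q^{-1}M)^{-ab+p_i}Z^0_k=\sum_{m\in\mathbb Z/D\mathbb Z}\alpha_{m,i}(k)\,\Psi_{2km-ab+p_i},$$ and $\alpha_{0,i}(k)=\alpha_0(k)\,q^{-\frac{a^2+b^2}{D}+\frac D4}$ for all $i$, where $\alpha_0(k)=\langle Z^0_k,\Psi_0\rangle$ is the coefficient of $\Psi_0$ in $Z^0_k$.
   Context: Standing setup. $(E,\omega)$ is a real $2$-dimensional symplectic vector space with a compatible linear complex structure $j$; $K_j=\{\alpha\in E^*\otimes\mathbb C:\alpha(j\cdot)=i\alpha\}$. A half-form line is a complex line $\delta$ with an isomorphism $\varphi:\delta^{\otimes2}\to K_j$; $\delta$ carries the Hermitian metric making $\varphi$ an isometry. For $v\in E\setminus\{0\}$, $\Omega_v$ denotes a vector of $\delta$ with $\varphi(\Omega_v^2)(v)=1$ (unique up to sign). $L\to E$ is the trivial Hermitian line bundle with connection $d-i\alpha$, where $\alpha_x(y)=\frac12\omega(x,y)$, and the compatible holomorphic structure; sections of $L^k\otimes\delta$ are identified with functions $E\to\delta$. For $k\in\mathbb Z_{>0}$ and $x\in E$, $T^*_x$ acts on sections of $L^k\otimes\delta$ by $(T^*_x\Psi)(y)=e^{-\frac{ik}{2}\omega(x,y)}\Psi(x+y)$. For a lattice $\Lambda\subset E$, $\mathcal H^\Lambda_k$ is the space of holomorphic sections $\Psi$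 of $L^k\otimes\delta$ with $T^*_x\Psi=\Psi$ for all $x\in\Lambda$, with inner product $\langle\Psi_1,\Psi_2\rangle=\int_F\langle\Psi_1,\Psi_2\rangle_\delta\,|\omega|$ ($F$ a fundamental domain of $\Lambda$). For sequences, $O(k^{-\infty})$ means $O(k^{-N})$ for every $N$. Knot state. Fix relatively prime positive integers $a,b$; $D=2ab$. Fix a basis $(\lambda,\mu)$ of $E$ with $\omega(\mu,\lambda)=4\pi$. $\mathcal H_k=\mathcal H_k^{\lambda\mathbb Z\oplus\mu\mathbb Z}$; $M=T^*_{\mu/2k}$, $L=T^*_{-\lambda/2k}$ (operators), $q=e^{i\pi/k}$, $q^{s/D}=e^{i\pi s/(kD)}$ for rational $s$. Fix $\Omega_\mu$; $(\xi_\ell)_{\ell\in\mathbb Z/2k\mathbb Z}$ is the orthonormal basis of $\mathcal H_k$ with $M\xi_\ell=q^\ell\xi_\ell$, $L\xi_\ell=\xi_{\ell-1}$, $\xi_0(0)\in\mathbb R_{>0}\Omega_\mu$. $Z^0_k=-\frac{i}{2\sqrt k}\sum_{\ell\in\mathbb Z/2k\mathbb Z}\xi_\ell$. $(\epsilon_i,p_i)_{i=1,\dots,4}$ are $(1,-a-b)$, $(-1,-a+b)$, $(1,a+b)$, $(-1,a-b)$. Second lattice. $\Omega_\lambda$ is the (fixed, $k$-independent) choice of sign with $Z^0_k(0)=\frac{e^{3i\pi/4}}{\sqrt2}(\frac{k}{2\pi})^{1/4}\Omega_\lambda+O(k^{-\infty})$. $R_D=D\mu\mathbb Z\oplus\lambda\mathbb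 Z$, $\mathcal H_{D,k}=\mathcal H_k^{R_D}\supset\mathcal H_k$ ($\dim=2kD$). $S=T^*_{-\lambda/2kD}$, $R=T^*_{(D\mu-2\lambda)/2kD}$. $(\Psi_n)_{n\in\mathbb Z/2kD\mathbb Z}$ is the orthonormal basis of $\mathcal H_{D,k}$ with $S\Psi_n=q^{n/D}\Psi_n$, $R\Psi_n=\Psi_{n+1}$ and phase such that $\Psi_0(0)=e^{i\pi/4}(\frac k{2\pi})^{1/4}\Omega_\lambda+O(k^{-\infty})$. *)

(* Defs.v *)
From Stdlib Require Import Reals ZArith.
Open Scope R_scope.

Record Cplx := mkC { Cre : R ; Cim : R }.
Definition C0 : Cplx := mkC 0 0.
Definition C1 : Cplx := mkC 1 0.
Definition Ci : Cplx := mkC 0 1.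
Definition RtoC (r : R) : Cplx := mkC r 0.
Definition Cadd (z w : Cplx) : Cplx := mkC (Cre z + Cre w) (Cim z + Cim w).
Definition Copp (z : Cplx) : Cplx := mkC (- Cre z) (- Cim z).
Definition Csub (z w : Cplx) : Cplx := Cadd z (Copp w).
Definition Cmul (z w : Cplx) : Cplx :=
  mkC (Cre z * Cre w - Cim z * Cim w) (Cre z * Cim w + Cim z * Cre w).
Definition Cconj (z : Cplx) : Cplx := mkC (Cre z) (- Cim z).
Definition Cnorm2 (z : Cplx) : R := Cre z * Cre z + Cim z * Cim z.
Definition Cabs (z : Cplx) : R := sqrt (Cnorm2 z).
Definition Cexpi (theta : R) : Cplx := mkC (cos theta) (sin theta).
Fixpoint Csum (n : nat) (f : nat -> Cplx) : Cplx :=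
  match n with O => C0 | S m => Cadd (Csum m f) (f m) end.

(* ---------- the symplectic plane (E, omega, j) ----------
   Every real 2-dim symplectic space with compatible complex structure is
   isomorphic to R^2 with omega((x1,x2),(y1,y2)) = x1 y2 - x2 y1 and
   j(x1,x2) = (-x2,x1)  (omega(u, j u) = |u|^2 > 0). *)
Definition E := (R * R)%type.
Definition Eadd (x y : E) : E := (fst x + fst y, snd x + snd y).
Definition Escal (r : R) (x : E) : E := (r * fst x, r * snd x).
Definition E0 : E := (0, 0).
Definition e1 : E := (1, 0).
Definition e2 : E := (0, 1).
Definition omega (x y : E) : R := fst x * snd y - snd x * fst y.
Definition jE (x : E) : E := (- snd x, fst x).
Definition Edist2 (x y : E) : R :=
  (fst x - fst y) * (fst x - fst y) + (snd x - snd y) * (snd x - snd y).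

(* ---------- canonical line K_j and the half-form line delta ----------
   K_j is identified with Cplx by  alpha |-> alpha(e1); the form with
   alpha(e1) = c is v |-> c (v1 + i v2).  Its Hermitian norm (induced by
   g = omega(., j .)) is |alpha|^2 = |alpha(e1)|^2 + |alpha(e2)|^2 = 2|c|^2.
   A half-form line delta is modelled as Cplx, with  phi : delta^2 -> K_j,
   phi(z (x) w) = kappa z w  (kappa <> 0 arbitrary: this covers every
   half-form line up to isomorphism).  The metric of delta making phi an
   isometry is  <z,w>_delta = sqrt 2 |kappa| z conj(w). *)
Definition Kval (c : Cplx) (v : E) : Cplx := Cmul c (mkC (fst v) (snd v)).
Definition phi_sq (kappa z : Cplx) (v : E) : Cplx := Kval (Cmul kappa (Cmul z z)) v.
Definition delta_inner (kappa : Cplx) (z w : Cplx) : Cplx :=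
  Cmul (RtoC (sqrt 2 * Cabs kappa)) (Cmul z (Cconj w)).
Definition is_Omega (kappa : Cplx) (v : E) (Om : Cplx) : Prop := phi_sq kappa Om v = C1.

(* ---------- sections of L^k (x) delta : functions E -> delta ---------- *)
Definition section := E -> Cplx.

Definition alpha_f (x y : E) : R := / 2 * omega x y.

Definition Tstar (k : nat) (x : E) (Psi : section) : section :=
  fun y => Cmul (Cexpi (- (INR k / 2) * omega x y)) (Psi (Eadd x y)).

Definition Cscale_sec (c : Cplx) (Psi : section) : section := fun y => Cmul c (Psi y).

Definition Ccont (f : E -> Cplx) : Prop :=
  forall x eps, 0 < eps -> exists d, 0 < d /\
    forall y, Edist2 x y < d * d -> Cnorm2 (Csub (f y) (f x)) < eps * eps.

Definition has_dderiv (f : E -> Cplx) (x v : E) (d : Cplx) : Prop :=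
  derivable_pt_lim (fun t => Cre (f (Eadd x (Escal t v)))) 0 (Cre d) /\
  derivable_pt_lim (fun t => Cim (f (Eadd x (Escal t v)))) 0 (Cim d).

(* holomorphic section of L^k (x) delta, for the holomorphic structure
   compatible with the connection d - i k alpha:  Psi is Cplx^1 and
   nabla_{e1} Psi + i nabla_{j e1} Psi = 0  (j e1 = e2),
   where nabla_v Psi = d_v Psi - i k alpha(v) Psi. *)
Definition holomorphic (k : nat) (Psi : section) : Prop :=
  exists d1 d2 : E -> Cplx, Ccont d1 /\ Ccont d2 /\
    (forall x, has_dderiv Psi x e1 (d1 x) /\ has_dderiv Psi x e2 (d2 x)) /\
    forall x,
      Cadd (Csub (d1 x) (Cmul (mkC 0 (INR k * alpha_f x e1)) (Psi x)))
           (Cmul Ci (Csub (d2 x) (Cmul (mkC 0 (INR k * alpha_f x e2)) (Psi x))))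
      = C0.

Definition inH (k : nat) (v1 v2 : E) (Psi : section) : Prop :=
  holomorphic k Psi /\
  forall m n : Z,
    forall y, Tstar k (Eadd (Escal (IZR m) v1) (Escal (IZR n) v2)) Psi y = Psi y.

Definition Int01 (g : R -> R) (v : R) : Prop :=
  exists pr : Riemann_integrable g 0 1, RiemannInt pr = v.
Definition Int01sq (h : R -> R -> R) (v : R) : Prop :=
  exists G : R -> R, (forall t, Int01 (fun s => h s t) (G t)) /\ Int01 G v.

(* <Psi1, Psi2> = int_F <Psi1,Psi2>_delta |omega|, F the fundamental domain
   {s v1 + t v2 : s,t in [0,1]} of v1 Z (+) v2 Z  *)
Definition inner_is (kappa : Cplx) (v1 v2 : E) (Psi1 Psi2 : section) (z : Cplx) : Prop :=
  let f := fun s t =>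
    Cmul (RtoC (Rabs (omega v1 v2)))
      (delta_inner kappa (Psi1 (Eadd (Escal s v1) (Escal t v2)))
                         (Psi2 (Eadd (Escal s v1) (Escal t v2)))) in
  Int01sq (fun s t => Cre (f s t)) (Cre z) /\ Int01sq (fun s t => Cim (f s t)) (Cim z).

(* an orthonormal basis (b_n), n in Z/NZ (represented as an N-periodic
   family indexed by Z), of H_k^Lambda *)
Definition is_onb (kappa : Cplx) (k : nat) (v1 v2 : E) (N : Z) (b : Z -> section) : Prop :=
  (forall n y, b (n + N)%Z y = b n y) /\
  (forall n, inH k v1 v2 (b n)) /\
  (forall n m, inner_is kappa v1 v2 (b n) (b m)
                 (if Z.eqb (n mod N) (m mod N) then C1 else C0)) /\
  (forall Psi, inH k v1 v2 Psi ->
     exists c : nat -> Cplx, forall y,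
       Psi y = Csum (Z.to_nat N) (fun l => Cmul (c l) (b (Z.of_nat l) y))).

Definition qpow (k : nat) (s : R) : Cplx := Cexpi (PI * s / INR k).

Definition op_zpow (f finv : section -> section) (n : Z) (Psi : section) : section :=
  match n with
  | Z0 => Psi
  | Zpos p => Nat.iter (Pos.to_nat p) f Psi
  | Zneg p => Nat.iter (Pos.to_nat p) finv Psi
  end.

(* (q^{-1} M)^n with M = T*_{mu/2k}; its inverse is q T*_{-mu/2k} *)
Definition qinvM_pow (k : nat) (mu : E) (n : Z) : section -> section :=
  op_zpow (fun Psi => Cscale_sec (qpow k (-1)) (Tstar k (Escal (/ (2 * INR k)) mu) Psi))
          (fun Psi => Cscale_sec (qpow k 1) (Tstar k (Escal (- / (2 * INR k)) mu) Psi))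
          n.

Definition eps_i (i : nat) : Z :=
  match i with 1%nat => 1 | 2%nat => -1 | 3%nat => 1 | _ => -1 end%Z.
Definition p_i (a b : Z) (i : nat) : Z :=
  match i with 1%nat => - a - b | 2%nat => - a + b | 3%nat => a + b | _ => a - b end%Z.

Definition Z0sec (k : nat) (xi : Z -> section) : section :=
  fun y => Cmul (mkC 0 (- / (2 * sqrt (INR k))))
                (Csum (2 * k) (fun l => xi (Z.of_nat l) y)).

Definition asym_eq (u w : nat -> Cplx) : Prop :=
  forall N : nat, exists Cst K0 : R, forall k : nat, (0 < k)%nat -> K0 <= INR k ->
    Cabs (Csub (u k) (w k)) <= Cst * / (INR k ^ N).

(* Main.v *)
Require Import Defs.
From Stdlib Require Import Reals ZArith Lia Lra Psatz FunctionalExtensionality.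
Open Scope R_scope.

Lemma Ceq (z w : Cplx) : Cre z = Cre w -> Cim z = Cim w -> z = w.
Proof. destruct z, w; simpl; intros; subst; reflexivity. Qed.

Ltac cring := apply Ceq; simpl; ring.

Lemma Cmul_assoc a b c : Cmul a (Cmul b c) = Cmul (Cmul a b) c. Proof. cring. Qed.
Lemma Cmul_comm a b : Cmul a b = Cmul b a. Proof. cring. Qed.
Lemma Cmul_1_l a : Cmul Defs.C1 a = a. Proof. cring. Qed.
Lemma Cmul_0_r a : Cmul a C0 = C0. Proof. cring. Qed.
Lemma Cadd_0_l a : Cadd C0 a = a. Proof. cring. Qed.
Lemma Cadd_0_r a : Cadd a C0 = a. Proof. cring. Qed.
Lemma Cadd_assoc a b c : Cadd a (Cadd b c) = Cadd (Cadd a b) c. Proof. cring. Qed.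
Lemma Cadd_comm a b : Cadd a b = Cadd b a. Proof. cring. Qed.
Lemma Cmul_add_r a b c : Cmul a (Cadd b c) = Cadd (Cmul a b) (Cmul a c). Proof. cring. Qed.
Lemma Cmul_add_l a b c : Cmul (Cadd b c) a = Cadd (Cmul b a) (Cmul c a). Proof. cring. Qed.

Lemma Cexpi_add a b : Cmul (Cexpi a) (Cexpi b) = Cexpi (a + b).
Proof. apply Ceq; simpl; [rewrite cos_plus | rewrite sin_plus]; ring. Qed.
Lemma Cexpi_ext a b : a = b -> Cexpi a = Cexpi b. Proof. intros ->; auto. Qed.
Lemma Cexpi_0 : Cexpi 0 = Defs.C1.
Proof. apply Ceq; simpl; [apply cos_0 | apply sin_0]. Qed.
Lemma Cexpi_0' a : a = 0 -> Cexpi a = Defs.C1. Proof. intros ->; apply Cexpi_0. Qed.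

Lemma qpow_add k s t : Cmul (qpow k s) (qpow k t) = qpow k (s + t).
Proof. unfold qpow; rewrite Cexpi_add; apply Cexpi_ext; unfold Rdiv; ring. Qed.
Lemma qpow_ext k s t : s = t -> qpow k s = qpow k t. Proof. intros ->; auto. Qed.
Lemma qpow_0 k : qpow k 0 = Defs.C1.
Proof. unfold qpow; apply Cexpi_0'; unfold Rdiv; ring. Qed.

Lemma Cexpi_cancel th X Y : Cmul (Cexpi th) X = Y -> X = Cmul (Cexpi (- th)) Y.
Proof. intros <-. rewrite Cmul_assoc, Cexpi_add, Cexpi_0', Cmul_1_l; auto; ring. Qed.
Lemma qpow_cancel k s X Y : Cmul (qpow k s) X = Y -> X = Cmul (qpow k (- s)) Y.
Proof. intros <-. rewrite Cmul_assoc, qpow_add, qpow_ext with (t := 0), qpow_0, Cmul_1_l; auto; ring. Qed.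

Lemma Csum_ext n f g : (forall l, (l < n)%nat -> f l = g l) -> Csum n f = Csum n g.
Proof. induction n; simpl; intros H; auto. rewrite IHn, H; auto. Qed.
Lemma Csum_add n f g : Csum n (fun l => Cadd (f l) (g l)) = Cadd (Csum n f) (Csum n g).
Proof. induction n; simpl. cring. rewrite IHn. cring. Qed.
Lemma Csum_mul n c f : Cmul c (Csum n f) = Csum n (fun l => Cmul c (f l)).
Proof. induction n; simpl. cring. rewrite <- IHn. cring. Qed.
Lemma Csum_mul_r n c f : Cmul (Csum n f) c = Csum n (fun l => Cmul (f l) c).
Proof. rewrite Cmul_comm, Csum_mul. apply Csum_ext; intros; apply Cmul_comm. Qed.
Lemma Csum_zero n : Csum n (fun _ => C0) = C0.
Proof. induction n; simpl; auto. rewrite IHn; cring. Qed.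
Lemma Csum_swap n m F : Csum n (fun j => Csum m (fun l => F j l)) = Csum m (fun l => Csum n (fun j => F j l)).
Proof. induction n; simpl. symmetry; apply Csum_zero. rewrite IHn, <- Csum_add; auto. Qed.
Lemma Csum_const n c : Csum n (fun _ => c) = Cmul (RtoC (INR n)) c.
Proof. induction n; simpl. cring. rewrite IHn. apply Ceq; simpl; try rewrite S_INR; try destruct n; simpl; ring. Qed.
Lemma Csum_shift n f : Csum (S n) f = Cadd (f O) (Csum n (fun l => f (S l))).
Proof. induction n. simpl. cring.
  change (Csum (S (S n)) f) with (Cadd (Csum (S n) f) (f (S n))). rewrite IHn. simpl. cring. Qed.
Lemma Csum_plus n p f : Csum (n + p) f = Cadd (Csum n f) (Csum p (fun r => f (n + r)%nat)).
Proof. induction p; simpl. rewrite Nat.add_0_r; cring.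
  rewrite Nat.add_succ_r; simpl. rewrite IHp. cring. Qed.
Lemma Csum_delta n f : (0 < n)%nat -> (forall l, (0 < l < n)%nat -> f l = C0) -> Csum n f = f O.
Proof. intros Hn H. destruct n; [lia|]. rewrite Csum_shift.
  rewrite Csum_ext with (g := fun _ => C0), Csum_zero. cring. intros; apply H; lia. Qed.
Lemma Csum_mult n p f : (0 < p)%nat -> (forall l, l mod p <> 0%nat -> f l = C0) ->
  Csum (n * p) f = Csum n (fun m => f (m * p)%nat).
Proof. intros Hp H. induction n. reflexivity.
  replace (S n * p)%nat with (n * p + p)%nat by lia. rewrite Csum_plus. simpl. rewrite IHn.
  f_equal. rewrite Csum_delta; auto.
  intros l Hl. apply H. rewrite Nat.add_comm, Nat.Div0.mod_add. rewrite Nat.mod_small; lia. Qed.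
Lemma Tstar_ext k x f g z : (forall w, f w = g w) -> Tstar k x f z = Tstar k x g z.
Proof. intros H; unfold Tstar; rewrite H; auto. Qed.
Lemma Tstar_vec k x x' f z : x = x' -> Tstar k x f z = Tstar k x' f z.
Proof. intros ->; auto. Qed.
Lemma Tstar_scal k x c f z : Tstar k x (fun w => Cmul c (f w)) z = Cmul c (Tstar k x f z).
Proof. unfold Tstar; cring. Qed.
Lemma Tstar_Csum k x n F z : Tstar k x (fun w => Csum n (fun l => F l w)) z = Csum n (fun l => Tstar k x (F l) z).
Proof. unfold Tstar. induction n; simpl. cring. rewrite <- IHn. cring. Qed.
Lemma Tstar_add k x f g z : Tstar k x (fun w => Cadd (f w) (g w)) z = Cadd (Tstar k x f z) (Tstar k x g z).
Proof. unfold Tstar. cring. Qed.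
Lemma Tstar_comp k x y f z : Tstar k x (Tstar k y f) z = Cmul (Cexpi (-(INR k/2) * omega y x)) (Tstar k (Eadd x y) f z).
Proof. unfold Tstar. rewrite !Cmul_assoc, !Cexpi_add.
  replace (Eadd y (Eadd x z)) with (Eadd (Eadd x y) z).
  f_equal. apply Cexpi_ext. destruct x, y, z; unfold omega, Eadd; simpl; ring.
  destruct x, y, z; unfold Eadd; simpl; f_equal; ring. Qed.
Lemma Tstar_zero k x f z : x = E0 -> Tstar k x f z = f z.
Proof. intros ->. unfold Tstar. rewrite Cexpi_0'. rewrite Cmul_1_l. destruct z; unfold Eadd, E0; simpl; f_equal; f_equal; ring.
  unfold omega, E0; simpl; ring. Qed.
Lemma Tinv_gen k x x' P Q s z : (forall y, Tstar k x P y = Cmul (qpow k s) (Q y)) ->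
  Eadd x' x = E0 -> omega x x' = 0 -> Tstar k x' Q z = Cmul (qpow k (-s)) (P z).
Proof. intros H H0 Hw. pose proof (Tstar_comp k x' x P z) as E.
  rewrite (Tstar_zero k (Eadd x' x)) in E by auto. rewrite Cexpi_0' in E by (rewrite Hw; ring).
  rewrite Cmul_1_l in E. rewrite (Tstar_ext k x' _ (fun w => Cmul (qpow k s) (Q w))) in E by auto.
  rewrite Tstar_scal in E. apply qpow_cancel in E. auto. Qed.

Lemma S_pow k r v P s z : (forall y, Tstar k (Escal (- r) v) P y = Cmul (qpow k s) (P y)) ->
  forall j : nat, Tstar k (Escal (INR j * - r) v) P z = Cmul (qpow k (INR j * s)) (P z).
Proof. intros H j. revert z. induction j; intros z.
  - rewrite Tstar_zero. rewrite qpow_ext with (t := 0) by (simpl; ring). rewrite qpow_0, Cmul_1_l; auto.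
    destruct v; unfold Escal, E0; simpl; f_equal; ring.
  - pose proof (Tstar_comp k (Escal (- r) v) (Escal (INR j * - r) v) P z) as E.
    rewrite Cexpi_0', Cmul_1_l in E by (destruct v; unfold omega, Escal; simpl; ring).
    rewrite (Tstar_vec k (Eadd _ _) (Escal (INR (S j) * - r) v)) in E.
    2:{ destruct v; unfold Eadd, Escal; cbn [fst snd]; rewrite S_INR; f_equal; ring. }
    rewrite <- E. rewrite (Tstar_ext _ _ _ (fun w => Cmul (qpow k (INR j * s)) (P w))) by auto.
    rewrite Tstar_scal, H, Cmul_assoc, qpow_add. f_equal. apply qpow_ext; rewrite S_INR; ring. Qed.

Lemma M_on k Dr lam mu P l z : (0 < k)%nat -> Dr <> 0 -> omega mu lam = 4 * PI ->
  (forall y, Tstar k (Escal (- / (2 * INR k * Dr)) lam) (P l) y = Cmul (qpow k (IZR l / Dr)) (P l y)) ->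
  (forall y, Tstar k (Escal (/ (2 * INR k * Dr)) (Eadd (Escal Dr mu) (Escal (-2) lam))) (P l) y = P (l + 1)%Z y) ->
  Tstar k (Escal (/ (2 * INR k)) mu) (P l) z = Cmul (qpow k (- (1 + 2 * IZR l) / Dr)) (P (l + 1)%Z z).
Proof. intros Hk HD Hlm HS HR.
  assert (Hk' : INR k <> 0) by (apply not_0_INR; lia).
  set (r := / (2 * INR k * Dr)).
  set (y1 := Escal r lam). set (xR := Escal r (Eadd (Escal Dr mu) (Escal (-2) lam))).
  assert (A : forall w, Tstar k y1 (P l) w = Cmul (qpow k (- (IZR l / Dr))) (P l w)).
  { intros w. apply (Tinv_gen k (Escal (- r) lam)); auto.
    destruct lam; unfold y1, Eadd, Escal, E0; simpl; f_equal; ring.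
    destruct lam; unfold y1, omega, Escal; simpl; ring. }
  assert (B : forall w, Tstar k (Eadd y1 y1) (P l) w = Cmul (qpow k (- (IZR l / Dr))) (Cmul (qpow k (- (IZR l / Dr))) (P l w))).
  { intros w. pose proof (Tstar_comp k y1 y1 (P l) w) as E.
    rewrite Cexpi_0', Cmul_1_l in E by (destruct lam; unfold y1, omega, Escal; simpl; ring).
    rewrite <- E. rewrite (Tstar_ext _ _ _ _ _ A), Tstar_scal, A; auto. }
  pose proof (Tstar_comp k xR (Eadd y1 y1) (P l) z) as E.
  rewrite (Tstar_ext _ _ _ _ _ B), !Tstar_scal in E. unfold xR in E; rewrite HR in E. fold xR in E.
  rewrite (Tstar_vec k (Eadd xR (Eadd y1 y1)) (Escal (/ (2 * INR k)) mu)) in E.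
  2:{ unfold xR, y1, r; destruct lam, mu; unfold Eadd, Escal; simpl; f_equal; field; auto. }
  symmetry in E. apply Cexpi_cancel in E. rewrite E.
  rewrite !Cmul_assoc. f_equal.
  rewrite <- Cmul_assoc, qpow_add. unfold qpow. rewrite Cexpi_add. apply Cexpi_ext.
  unfold xR, y1, r. destruct lam as [l1 l2], mu as [m1 m2]. unfold omega, Eadd, Escal in *; simpl in *.
  replace PI with ((m1 * l2 - m2 * l1) / 4) by lra. field; auto. Qed.
Definition secf (P : Z -> section) (DN : nat) (be : nat -> Cplx) (ell : nat -> Z) : section :=
  fun y => Csum DN (fun m => Cmul (be m) (P (ell m) y)).

Lemma secf_ext P DN be be' ell ell' : (forall m, (m < DN)%nat -> be m = be' m) ->
  (forall m, ell m = ell' m) -> secf P DN be ell = secf P DN be' ell'.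
Proof. intros H1 H2. apply functional_extensionality; intros y. unfold secf.
  apply Csum_ext; intros. rewrite H1, H2; auto. Qed.

Lemma Tstar_secf k x P DN be ell z :
  Tstar k x (secf P DN be ell) z = Csum DN (fun m => Cmul (be m) (Tstar k x (P (ell m)) z)).
Proof. unfold secf. rewrite (Tstar_Csum k x DN (fun m w => Cmul (be m) (P (ell m) w))).
  apply Csum_ext; intros. apply Tstar_scal. Qed.

Definition gph (Dr l n : R) : R := - n - (2 * l * n + n * n) / Dr.


Lemma stepF k Dr lam mu P DN be ell : (0 < k)%nat -> Dr <> 0 -> omega mu lam = 4 * PI ->
  (forall n y, Tstar k (Escal (- / (2 * INR k * Dr)) lam) (P n) y = Cmul (qpow k (IZR n / Dr)) (P n y)) ->
  (forall n y, Tstar k (Escal (/ (2 * INR k * Dr)) (Eadd (Escal Dr mu) (Escal (-2) lam))) (P n) y = P (n + 1)%Z y) ->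
  (fun Psi => Cscale_sec (qpow k (-1)) (Tstar k (Escal (/ (2 * INR k)) mu) Psi)) (secf P DN be ell)
  = secf P DN (fun m => Cmul (be m) (qpow k (-1 - (1 + 2 * IZR (ell m)) / Dr))) (fun m => (ell m + 1)%Z).
Proof. intros Hk HD Hlm HS HR. apply functional_extensionality; intros y.
  unfold Cscale_sec. rewrite Tstar_secf, Csum_mul. unfold secf. apply Csum_ext; intros m _.
  rewrite (M_on k Dr lam mu P) by auto. rewrite !Cmul_assoc. f_equal.
  rewrite (Cmul_comm (qpow k (-1))), <- Cmul_assoc, qpow_add. f_equal. apply qpow_ext. unfold Rdiv; ring. Qed.

Lemma stepG k Dr lam mu P DN be ell : (0 < k)%nat -> Dr <> 0 -> omega mu lam = 4 * PI ->
  (forall n y, Tstar k (Escal (- / (2 * INR k * Dr)) lam) (P n) y = Cmul (qpow k (IZR n / Dr)) (P n y)) ->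
  (forall n y, Tstar k (Escal (/ (2 * INR k * Dr)) (Eadd (Escal Dr mu) (Escal (-2) lam))) (P n) y = P (n + 1)%Z y) ->
  (fun Psi => Cscale_sec (qpow k 1) (Tstar k (Escal (- / (2 * INR k)) mu) Psi)) (secf P DN be ell)
  = secf P DN (fun m => Cmul (be m) (qpow k (1 + (1 + 2 * (IZR (ell m) - 1)) / Dr))) (fun m => (ell m - 1)%Z).
Proof. intros Hk HD Hlm HS HR. apply functional_extensionality; intros y.
  unfold Cscale_sec. rewrite Tstar_secf, Csum_mul. unfold secf. apply Csum_ext; intros m _.
  assert (Hm : forall w, Tstar k (Escal (/ (2 * INR k)) mu) (P (ell m - 1)%Z) w =
     Cmul (qpow k (- (1 + 2 * IZR (ell m - 1)) / Dr)) (P (ell m) w)).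
  { intros w. rewrite (M_on k Dr lam mu P) by auto. f_equal. f_equal. ring. }
  rewrite (Tinv_gen k _ _ _ _ _ y Hm).
  2:{ destruct mu; unfold Eadd, Escal, E0; cbn [fst snd]; f_equal; ring. }
  2:{ destruct mu; unfold omega, Escal; cbn [fst snd]; ring. }
  rewrite !Cmul_assoc. f_equal.
  rewrite (Cmul_comm (qpow k 1)), <- Cmul_assoc, qpow_add. f_equal. apply qpow_ext.
  rewrite minus_IZR. unfold Rdiv; ring. Qed.
Lemma iterF k Dr lam mu P DN : (0 < k)%nat -> Dr <> 0 -> omega mu lam = 4 * PI ->
  (forall n y, Tstar k (Escal (- / (2 * INR k * Dr)) lam) (P n) y = Cmul (qpow k (IZR n / Dr)) (P n y)) ->
  (forall n y, Tstar k (Escal (/ (2 * INR k * Dr)) (Eadd (Escal Dr mu) (Escal (-2) lam))) (P n) y = P (n + 1)%Z y) ->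
  forall (n : nat) be ell,
  Nat.iter n (fun Psi => Cscale_sec (qpow k (-1)) (Tstar k (Escal (/ (2 * INR k)) mu) Psi)) (secf P DN be ell)
  = secf P DN (fun m => Cmul (be m) (qpow k (gph Dr (IZR (ell m)) (INR n)))) (fun m => (ell m + Z.of_nat n)%Z).
Proof. intros Hk HD Hlm HS HR n. induction n; intros be ell.
  - simpl. apply secf_ext; intros. rewrite qpow_ext with (t := 0), qpow_0. cring. unfold gph, Rdiv; ring. lia.
  - rewrite Nat.iter_succ. rewrite IHn. rewrite (stepF k Dr lam mu) by auto. apply secf_ext; intros.
    rewrite <- Cmul_assoc, qpow_add. f_equal. apply qpow_ext. rewrite plus_IZR, <- INR_IZR_INZ, S_INR.
    unfold gph. field. auto. lia. Qed.

Lemma iterG k Dr lam mu P DN : (0 < k)%nat -> Dr <> 0 -> omega mu lam = 4 * PI ->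
  (forall n y, Tstar k (Escal (- / (2 * INR k * Dr)) lam) (P n) y = Cmul (qpow k (IZR n / Dr)) (P n y)) ->
  (forall n y, Tstar k (Escal (/ (2 * INR k * Dr)) (Eadd (Escal Dr mu) (Escal (-2) lam))) (P n) y = P (n + 1)%Z y) ->
  forall (n : nat) be ell,
  Nat.iter n (fun Psi => Cscale_sec (qpow k 1) (Tstar k (Escal (- / (2 * INR k)) mu) Psi)) (secf P DN be ell)
  = secf P DN (fun m => Cmul (be m) (qpow k (gph Dr (IZR (ell m)) (- INR n)))) (fun m => (ell m - Z.of_nat n)%Z).
Proof. intros Hk HD Hlm HS HR n. induction n; intros be ell.
  - simpl. apply secf_ext; intros. rewrite qpow_ext with (t := 0), qpow_0. cring. unfold gph, Rdiv; ring. lia.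
  - rewrite Nat.iter_succ. rewrite IHn. rewrite (stepG k Dr lam mu) by auto. apply secf_ext; intros.
    rewrite <- Cmul_assoc, qpow_add. f_equal. apply qpow_ext. rewrite minus_IZR, <- INR_IZR_INZ, S_INR.
    unfold gph. field. auto. lia. Qed.

Lemma qinvM_secf k Dr lam mu P DN : (0 < k)%nat -> Dr <> 0 -> omega mu lam = 4 * PI ->
  (forall n y, Tstar k (Escal (- / (2 * INR k * Dr)) lam) (P n) y = Cmul (qpow k (IZR n / Dr)) (P n y)) ->
  (forall n y, Tstar k (Escal (/ (2 * INR k * Dr)) (Eadd (Escal Dr mu) (Escal (-2) lam))) (P n) y = P (n + 1)%Z y) ->
  forall (N : Z) be ell,
  qinvM_pow k mu N (secf P DN be ell)
  = secf P DN (fun m => Cmul (be m) (qpow k (gph Dr (IZR (ell m)) (IZR N)))) (fun m => (ell m + N)%Z).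
Proof. intros Hk HD Hlm HS HR N be ell. unfold qinvM_pow, op_zpow. destruct N as [|p|p].
  - apply secf_ext; intros. rewrite qpow_ext with (t := 0), qpow_0. cring. unfold gph, Rdiv; ring. lia.
  - rewrite (iterF k Dr lam mu) by auto. apply secf_ext; intros.
    f_equal; apply qpow_ext; f_equal. rewrite INR_IZR_INZ, positive_nat_Z; auto.
    rewrite positive_nat_Z; auto.
  - rewrite (iterG k Dr lam mu) by auto. apply secf_ext; intros.
    f_equal; apply qpow_ext; f_equal. rewrite INR_IZR_INZ, positive_nat_Z; auto.
    rewrite positive_nat_Z; lia. Qed.
Lemma bound0 cr ci ur ui vr vi e M : M = cr*cr+ci*ci+1 -> 0 < e ->
  ur*ur+ui*ui < e/(2*M)*(e/(2*M)) -> vr*vr+vi*vi < e/2*(e/2) ->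
  (cr*ur - ci*ui + vr)*(cr*ur - ci*ui + vr) + (cr*ui + ci*ur + vi)*(cr*ui + ci*ur + vi) < e*e.
Proof. intros HM He H1 H2.
  assert (HM1 : 1 <= M) by nra.
  assert (h1 : (cr*ur - ci*ui + vr)*(cr*ur - ci*ui + vr) + (cr*ui + ci*ur + vi)*(cr*ui + ci*ur + vi)
     <= 2*((cr*cr+ci*ci)*(ur*ur+ui*ui)) + 2*(vr*vr+vi*vi)).
  { set (p := cr*ur - ci*ui). set (q := cr*ui + ci*ur).
    assert (E : p*p + q*q = (cr*cr+ci*ci)*(ur*ur+ui*ui)) by (unfold p, q; ring).
    pose proof (Rle_0_sqr (p - vr)). pose proof (Rle_0_sqr (q - vi)). unfold Rsqr in *. nra. }
  assert (h2 : (cr*cr+ci*ci)*(ur*ur+ui*ui) <= M*(ur*ur+ui*ui)) by nra.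
  assert (h3 : M * (e/(2*M)*(e/(2*M))) = e*e/(4*M)) by (field; lra).
  assert (h4 : e*e/(4*M) <= e*e/4).
  { apply Rmult_le_compat_l. nra. apply Rinv_le_contravar; lra. }
  assert (h5 : M*(ur*ur+ui*ui) < M * (e/(2*M)*(e/(2*M)))) by (apply Rmult_lt_compat_l; lra).
  nra. Qed.
Lemma bound1 cr ci a1 a2 b1 b2 g1 g2 h1 h2 e M : M = cr*cr+ci*ci+1 -> 0 < e ->
  (a1 + - b1)*(a1 + - b1)+(a2 + - b2)*(a2 + - b2) < e/(2*M)*(e/(2*M)) ->
  (g1 + - h1)*(g1 + - h1)+(g2 + - h2)*(g2 + - h2) < e/2*(e/2) ->
  (cr*a1 - ci*a2 + g1 + - (cr*b1 - ci*b2 + h1)) * (cr*a1 - ci*a2 + g1 + - (cr*b1 - ci*b2 + h1)) +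
  (cr*a2 + ci*a1 + g2 + - (cr*b2 + ci*b1 + h2)) * (cr*a2 + ci*a1 + g2 + - (cr*b2 + ci*b1 + h2)) < e*e.
Proof. intros. pose proof (bound0 cr ci (a1 + - b1) (a2 + - b2) (g1 + - h1) (g2 + - h2) e M H H0 H1 H2).
  replace (cr*a1 - ci*a2 + g1 + - (cr*b1 - ci*b2 + h1)) with (cr*(a1 + - b1) - ci*(a2 + - b2) + (g1 + - h1)) by ring.
  replace (cr*a2 + ci*a1 + g2 + - (cr*b2 + ci*b1 + h2)) with (cr*(a2 + - b2) + ci*(a1 + - b1) + (g2 + - h2)) by ring.
  auto. Qed.
Lemma dext f g x l l' : (forall t, f t = g t) -> derivable_pt_lim f x l -> l = l' -> derivable_pt_lim g x l'.
Proof. intros H Hd <-. replace g with f; auto. apply functional_extensionality; auto. Qed.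

Lemma dlin3 f g h x l1 l2 l3 a b : derivable_pt_lim f x l1 -> derivable_pt_lim g x l2 -> derivable_pt_lim h x l3 ->
  derivable_pt_lim (fun t => a * f t + b * g t + h t) x (a * l1 + b * l2 + l3).
Proof. intros H1 H2 H3.
  pose proof (derivable_pt_lim_plus _ _ _ _ _ (derivable_pt_lim_plus _ _ _ _ _
     (derivable_pt_lim_scal f a x l1 H1) (derivable_pt_lim_scal g b x l2 H2)) H3) as H.
  unfold plus_fct, mult_real_fct in H. exact H. Qed.

Lemma has_dderiv_lin f g x v d1 d2 c : has_dderiv f x v d1 -> has_dderiv g x v d2 ->
  has_dderiv (fun y => Cadd (Cmul c (f y)) (g y)) x v (Cadd (Cmul c d1) d2).
Proof. intros [H1 H2] [H3 H4]. split.
  - eapply dext; [| apply (dlin3 _ _ _ _ _ _ _ (Cre c) (- Cim c) H1 H2 H3) |].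
    intros t; simpl; ring. simpl; ring.
  - eapply dext; [| apply (dlin3 _ _ _ _ _ _ _ (Cre c) (Cim c) H2 H1 H4) |].
    intros t; simpl; ring. simpl; ring. Qed.

Lemma Ccont_lin f g c : Ccont f -> Ccont g -> Ccont (fun y => Cadd (Cmul c (f y)) (g y)).
Proof. intros Hf Hg x eps He.
  set (M := Cnorm2 c + 1).
  assert (HM : 1 <= M) by (unfold M, Cnorm2; nra).
  destruct (Hf x (eps / (2 * M))) as [d1 [Hd1 H1]]. apply Rdiv_lt_0_compat; lra.
  destruct (Hg x (eps / 2)) as [d2 [Hd2 H2]]. lra.
  exists (Rmin d1 d2). split. apply Rmin_pos; auto.
  intros y Hy.
  assert (Hy1 : Edist2 x y < d1 * d1).
  { pose proof (Rmin_l d1 d2). pose proof (Rmin_pos d1 d2 Hd1 Hd2). nra. }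
  assert (Hy2 : Edist2 x y < d2 * d2).
  { pose proof (Rmin_r d1 d2). pose proof (Rmin_pos d1 d2 Hd1 Hd2). nra. }
  specialize (H1 y Hy1). specialize (H2 y Hy2).
  unfold Cnorm2, Csub, Cadd, Copp, Cmul in *; simpl in *.
  apply (bound1 _ _ _ _ _ _ _ _ _ _ eps M); auto. Qed.

Lemma hol_zero k : holomorphic k (fun _ => C0).
Proof. exists (fun _ => C0), (fun _ => C0). split; [|split; [|split]].
  - intros x eps He. exists 1. split. lra. intros. unfold Cnorm2; simpl; nra.
  - intros x eps He. exists 1. split. lra. intros. unfold Cnorm2; simpl; nra.
  - intros x; split; split; simpl; apply (derivable_pt_lim_const 0 0).
  - intros x. apply Ceq; simpl; ring. Qed.

Lemma hol_lin k f g c : holomorphic k f -> holomorphic k g -> holomorphic k (fun y => Cadd (Cmul c (f y)) (g y)).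
Proof. intros [d1 [d2 [C1f [C2f [Df Ef]]]]] [d1' [d2' [C1g [C2g [Dg Eg]]]]].
  exists (fun x => Cadd (Cmul c (d1 x)) (d1' x)), (fun x => Cadd (Cmul c (d2 x)) (d2' x)).
  split; [|split; [|split]].
  - apply Ccont_lin; auto.
  - apply Ccont_lin; auto.
  - intros x; destruct (Df x), (Dg x); split; apply has_dderiv_lin; auto.
  - intros x. specialize (Ef x). specialize (Eg x).
    apply (f_equal Cre) in Ef as Ef1. apply (f_equal Cim) in Ef as Ef2.
    apply (f_equal Cre) in Eg as Eg1. apply (f_equal Cim) in Eg as Eg2.
    simpl in *. apply Ceq; simpl.
    + match type of Ef1 with ?A = _ => match type of Ef2 with ?B = _ => match type of Eg1 with ?G = _ =>
      transitivity (Cre c * A - Cim c * B + G); [ring | rewrite Ef1, Ef2, Eg1; ring] end end end.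
    + match type of Ef1 with ?A = _ => match type of Ef2 with ?B = _ => match type of Eg2 with ?G = _ =>
      transitivity (Cre c * B + Cim c * A + G); [ring | rewrite Ef1, Ef2, Eg2; ring] end end end. Qed.

Lemma hol_ext k f g : (forall y, f y = g y) -> holomorphic k f -> holomorphic k g.
Proof. intros H Hf. replace g with f; auto. apply functional_extensionality; auto. Qed.

Lemma hol_Csum k n F : (forall l, (l < n)%nat -> holomorphic k (F l)) -> holomorphic k (fun y => Csum n (fun l => F l y)).
Proof. induction n; intros H; simpl. apply hol_zero.
  apply (hol_ext k (fun y => Cadd (Cmul Defs.C1 (Csum n (fun l => F l y))) (F n y))).
  intros; rewrite Cmul_1_l; auto. apply hol_lin; auto. Qed.

Lemma hol_scal k c f : holomorphic k f -> holomorphic k (fun y => Cmul c (f y)).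
Proof. intros H. apply (hol_ext k (fun y => Cadd (Cmul c (f y)) C0)). intros; apply Cadd_0_r.
  apply hol_lin; auto; apply hol_zero. Qed.
Lemma Int01_lin f g v w l : Int01 f v -> Int01 g w -> Int01 (fun x => f x + l * g x) (v + l * w).
Proof. intros [p1 H1] [p2 H2]. exists (RiemannInt_P10 l p1 p2). etransitivity; [apply (RiemannInt_P13 p1 p2)|]. subst; auto. Qed.
Lemma Int01_ext f g v : (forall x, f x = g x) -> Int01 f v -> Int01 g v.
Proof. intros H Hf. replace g with f; auto. apply functional_extensionality; auto. Qed.
Lemma Int01_zero : Int01 (fun _ => 0) 0.
Proof. exists (RiemannInt_P14 0 1 0). etransitivity; [apply RiemannInt_P15|]. ring. Qed.
Lemma Int01sq_lin f g v w l : Int01sq f v -> Int01sq g w -> Int01sq (fun s t => f s t + l * g s t) (v + l * w).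
Proof. intros [G1 [H1 K1]] [G2 [H2 K2]]. exists (fun t => G1 t + l * G2 t). split.
  intros t; apply Int01_lin; auto. apply Int01_lin; auto. Qed.
Lemma Int01sq_ext f g v : (forall s t, f s t = g s t) -> Int01sq f v -> Int01sq g v.
Proof. intros H Hf. replace g with f; auto. apply functional_extensionality; intros s;
  apply functional_extensionality; auto. Qed.
Lemma Int01sq_zero : Int01sq (fun _ _ => 0) 0.
Proof. exists (fun _ => 0). split; auto using Int01_zero. Qed.
Lemma Int01sq_ext2 f g v v' : (forall s t, f s t = g s t) -> v = v' -> Int01sq f v -> Int01sq g v'.
Proof. intros H <-; apply Int01sq_ext; auto. Qed.

Lemma inner_zero kappa v1 v2 g : inner_is kappa v1 v2 (fun _ => C0) g C0.
Proof. unfold inner_is; simpl. split; eapply Int01sq_ext2; try apply Int01sq_zero; intros; simpl; ring. Qed.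

Lemma inner_lin kappa v1 v2 f h g c z1 z2 : inner_is kappa v1 v2 f g z1 -> inner_is kappa v1 v2 h g z2 ->
  inner_is kappa v1 v2 (fun y => Cadd (Cmul c (f y)) (h y)) g (Cadd (Cmul c z1) z2).
Proof. unfold inner_is; cbv zeta. intros [Af Bf] [Ah Bh]. split.
  - pose proof (Int01sq_lin _ _ _ _ (- Cim c) (Int01sq_lin _ _ _ _ (Cre c) Ah Af) Bf) as H.
    eapply Int01sq_ext2; [| | exact H]; intros; simpl; ring.
  - pose proof (Int01sq_lin _ _ _ _ (Cim c) (Int01sq_lin _ _ _ _ (Cre c) Bh Bf) Af) as H.
    eapply Int01sq_ext2; [| | exact H]; intros; simpl; ring. Qed.

Lemma inner_ext kappa v1 v2 f f' g z z' : (forall y, f y = f' y) -> z = z' ->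
  inner_is kappa v1 v2 f g z -> inner_is kappa v1 v2 f' g z'.
Proof. intros H <- Hf. replace f' with f; auto. apply functional_extensionality; auto. Qed.

Lemma inner_Csum kappa v1 v2 n be F g z : (forall m, (m < n)%nat -> inner_is kappa v1 v2 (F m) g (z m)) ->
  inner_is kappa v1 v2 (fun y => Csum n (fun m => Cmul (be m) (F m y))) g (Csum n (fun m => Cmul (be m) (z m))).
Proof. induction n; intros H; simpl. apply inner_zero.
  eapply inner_ext; [| | apply (inner_lin _ _ _ (F n) (fun y => Csum n (fun m => Cmul (be m) (F m y))) g (be n))].
  intros; simpl; apply Cadd_comm. apply Cadd_comm. auto. auto. Qed.
Lemma geo_tel k L n : Cmul (qpow k L) (Csum n (fun j => qpow k (INR j * L))) =
  Cadd (Csum n (fun j => qpow k (INR j * L))) (Csub (qpow k (INR n * L)) Defs.C1).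
Proof. induction n.
  - cbn [Csum]. rewrite (qpow_ext k (INR 0 * L) 0) by (simpl; ring). rewrite qpow_0. cring.
  - change (Csum (S n) ?f) with (Cadd (Csum n f) (f n)). rewrite Cmul_add_r, IHn, qpow_add.
    rewrite (qpow_ext k (L + INR n * L) (INR (S n) * L)) by (rewrite S_INR; ring). cring. Qed.

Lemma Cmul_fix w G : Cmul w G = G -> w = Defs.C1 \/ G = C0.
Proof. intros H. destruct (Req_dec (Cre w) 1) as [H1|H1]; destruct (Req_dec (Cim w) 0) as [H2|H2].
  - left. apply Ceq; auto.
  - right. apply (f_equal Cre) in H as Ha. apply (f_equal Cim) in H as Hb. simpl in *.
    assert (A : ((Cre w - 1)*(Cre w - 1) + Cim w * Cim w) * Cre G = 0) by nra.
    assert (B : ((Cre w - 1)*(Cre w - 1) + Cim w * Cim w) * Cim G = 0) by nra.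
    assert (P : (Cre w - 1)*(Cre w - 1) + Cim w * Cim w <> 0) by nra.
    apply Ceq; simpl; [apply (Rmult_eq_reg_l _ _ _ (eq_trans A (eq_sym (Rmult_0_r _))) P)|
                        apply (Rmult_eq_reg_l _ _ _ (eq_trans B (eq_sym (Rmult_0_r _))) P)].
  - right. apply (f_equal Cre) in H as Ha. apply (f_equal Cim) in H as Hb. simpl in *.
    assert (A : ((Cre w - 1)*(Cre w - 1) + Cim w * Cim w) * Cre G = 0) by nra.
    assert (B : ((Cre w - 1)*(Cre w - 1) + Cim w * Cim w) * Cim G = 0) by nra.
    assert (P : (Cre w - 1)*(Cre w - 1) + Cim w * Cim w <> 0) by nra.
    apply Ceq; simpl; [apply (Rmult_eq_reg_l _ _ _ (eq_trans A (eq_sym (Rmult_0_r _))) P)|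
                        apply (Rmult_eq_reg_l _ _ _ (eq_trans B (eq_sym (Rmult_0_r _))) P)].
  - right. apply (f_equal Cre) in H as Ha. apply (f_equal Cim) in H as Hb. simpl in *.
    assert (A : ((Cre w - 1)*(Cre w - 1) + Cim w * Cim w) * Cre G = 0) by nra.
    assert (B : ((Cre w - 1)*(Cre w - 1) + Cim w * Cim w) * Cim G = 0) by nra.
    assert (P : (Cre w - 1)*(Cre w - 1) + Cim w * Cim w <> 0) by nra.
    apply Ceq; simpl; [apply (Rmult_eq_reg_l _ _ _ (eq_trans A (eq_sym (Rmult_0_r _))) P)|
                        apply (Rmult_eq_reg_l _ _ _ (eq_trans B (eq_sym (Rmult_0_r _))) P)]. Qed.

Lemma root_one k l j : (0 < k)%nat -> (l mod (2 * k) = 0)%nat -> qpow k (INR j * INR l) = Defs.C1.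
Proof. intros Hk Hl. assert (Hk' : INR k <> 0) by (apply not_0_INR; lia).
  destruct (Nat.Div0.mod_divides l (2 * k)) as [[t Ht] _]; auto. subst l.
  unfold qpow, Cexpi. replace (PI * (INR j * INR (2 * k * t)) / INR k) with (0 + 2 * INR (j * t) * PI).
  rewrite cos_period, sin_period, cos_0, sin_0; auto.
  rewrite !mult_INR. simpl INR. field; auto. Qed.

Lemma root_ne k l : (0 < k)%nat -> (l mod (2 * k) <> 0)%nat -> qpow k (INR l) <> Defs.C1.
Proof. intros Hk Hl H. assert (Hk' : INR k <> 0) by (apply not_0_INR; lia).
  unfold qpow, Cexpi in H. injection H as Hc Hs.
  set (th := PI * INR l / INR k) in *.
  assert (Hs2 : sin (th / 2) = 0).
  { pose proof (cos_2a_sin (th / 2)) as E. replace (2 * (th / 2)) with th in E by field. nra. }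
  destruct (sin_eq_0_0 _ Hs2) as [K HK].
  assert (HK2 : INR l = 2 * INR k * IZR K).
  { unfold th in HK. pose proof PI_RGT_0. apply (Rmult_eq_reg_l (PI / (2 * INR k))).
    transitivity (PI * INR l / INR k / 2). field; auto. rewrite HK. field; auto.
    unfold Rdiv. apply Rmult_integral_contrapositive_currified. lra. apply Rinv_neq_0_compat. lra. }
  rewrite !INR_IZR_INZ, <- mult_IZR, <- mult_IZR in HK2. apply eq_IZR in HK2.
  apply Hl. apply Nat2Z.inj. rewrite Nat2Z.inj_mod, HK2. rewrite Nat2Z.inj_mul.
  change (Z.of_nat 2) with 2%Z. rewrite Z.mul_comm, Z.mod_mul. auto. lia. Qed.

Lemma root_full k l : (0 < k)%nat -> qpow k (INR (2 * k) * INR l) = Defs.C1.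
Proof. intros Hk. assert (Hk' : INR k <> 0) by (apply not_0_INR; lia).
  unfold qpow, Cexpi. replace (PI * (INR (2 * k) * INR l) / INR k) with (0 + 2 * INR l * PI).
  rewrite cos_period, sin_period, cos_0, sin_0; auto.
  rewrite !mult_INR. simpl INR. field; auto. Qed.

Lemma geo_sum k l : (0 < k)%nat ->
  Csum (2 * k) (fun j => qpow k (INR j * INR l)) =
  if Nat.eqb (l mod (2 * k)) 0 then RtoC (INR (2 * k)) else C0.
Proof. intros Hk. destruct (Nat.eqb_spec (l mod (2 * k)) 0) as [H|H].
  - rewrite Csum_ext with (g := fun _ => Defs.C1). rewrite Csum_const. cring.
    intros; apply root_one; auto.
  - pose proof (geo_tel k (INR l) (2 * k)) as E.
    rewrite (root_full k l) in E by auto.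
    replace (Cadd _ (Csub Defs.C1 Defs.C1)) with (Csum (2 * k) (fun j => qpow k (INR j * INR l))) in E by cring.
    destruct (Cmul_fix _ _ E) as [E1|E1]; auto. exfalso; apply (root_ne k l); auto. Qed.
Lemma phase_id (a b : Z) (i : nat) : (0 < a)%Z -> (0 < b)%Z -> (1 <= i <= 4)%nat ->
  IZR (eps_i i) + gph (IZR (2 * a * b)) 0 (IZR (- (a * b) + p_i a b i))
  = - (IZR (a * a + b * b) / IZR (2 * a * b)) + IZR (2 * a * b) / 4.
Proof. intros Ha Hb Hi. assert (Ha' : IZR a <> 0) by (apply not_0_IZR; lia).
  assert (Hb' : IZR b <> 0) by (apply not_0_IZR; lia).
  unfold gph. destruct i as [|[|[|[|[|i]]]]]; try lia; cbn [eps_i p_i];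
  repeat first [rewrite minus_IZR | rewrite plus_IZR | rewrite opp_IZR | rewrite mult_IZR]; field; auto. Qed.

Lemma RtoC_cancel r X Y : r <> 0 -> Cmul (RtoC r) X = Cmul (RtoC r) Y -> X = Y.
Proof. intros Hr H. apply (f_equal (Cmul (RtoC (/ r)))) in H. rewrite !Cmul_assoc in H.
  replace (Cmul (RtoC (/ r)) (RtoC r)) with Defs.C1 in H. rewrite !Cmul_1_l in H; auto.
  apply Ceq; simpl; field; auto. Qed.
Theorem mainTheorem6
  (a b : Z) (lam mu : E) (kappa Om_mu Om_lam : Cplx)
  (xi : nat -> Z -> section) (Psi : nat -> Z -> section)
  (* a, b relatively prime positive integers, D = 2ab *)
  (Ha : (0 < a)%Z) (Hb : (0 < b)%Z) (Hab : Z.gcd a b = 1%Z)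
  (* basis (lambda, mu) of E with omega(mu, lambda) = 4 pi *)
  (Hlm : omega mu lam = 4 * PI)
  (* the half-form line *)
  (Hkappa : kappa <> C0)
  (* Omega_mu fixed *)
  (HOm_mu : is_Omega kappa mu Om_mu)
  (* (xi_l) : the orthonormal basis of H_k with M xi_l = q^l xi_l,
     L xi_l = xi_{l-1}, xi_0(0) in R_{>0} Omega_mu *)
  (Hxi_onb : forall k : nat, (0 < k)%nat ->
     is_onb kappa k lam mu (2 * Z.of_nat k) (xi k))
  (Hxi_M : forall (k : nat) (l : Z) (y : E), (0 < k)%nat ->
     Tstar k (Escal (/ (2 * INR k)) mu) (xi k l) y
       = Cmul (qpow k (IZR l)) (xi k l y))
  (Hxi_L : forall (k : nat) (l : Z) (y : E), (0 < k)%nat ->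
     Tstar k (Escal (- / (2 * INR k)) lam) (xi k l) y = xi k (l - 1)%Z y)
  (Hxi_0 : forall k : nat, (0 < k)%nat ->
     exists r : R, 0 < r /\ xi k 0%Z E0 = Cmul (RtoC r) Om_mu)
  (* Omega_lambda : the k-independent sign with
     Z^0_k(0) = e^{3 i pi/4}/sqrt 2 (k/2pi)^{1/4} Omega_lambda + O(k^-oo) *)
  (HOm_lam : is_Omega kappa lam Om_lam)
  (HZ0 : asym_eq (fun k => Z0sec k (xi k) E0)
     (fun k => Cmul (Cmul (Cexpi (3 * PI / 4)) (RtoC (/ sqrt 2 * Rpower (INR k / (2 * PI)) (/ 4))))
                    Om_lam))
  (* (Psi_n) : the orthonormal basis of H_{D,k} (lattice D mu Z (+) lambda Z)
     with S Psi_n = q^{n/D} Psi_n, R Psi_n = Psi_{n+1},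
     Psi_0(0) = e^{i pi/4} (k/2pi)^{1/4} Omega_lambda + O(k^-oo) *)
  (HPsi_onb : forall k : nat, (0 < k)%nat ->
     is_onb kappa k (Escal (IZR (2 * a * b)) mu) lam
            (2 * Z.of_nat k * (2 * a * b)) (Psi k))
  (HPsi_S : forall (k : nat) (n : Z) (y : E), (0 < k)%nat ->
     Tstar k (Escal (- / (2 * INR k * IZR (2 * a * b))) lam) (Psi k n) y
       = Cmul (qpow k (IZR n / IZR (2 * a * b))) (Psi k n y))
  (HPsi_R : forall (k : nat) (n : Z) (y : E), (0 < k)%nat ->
     Tstar k (Escal (/ (2 * INR k * IZR (2 * a * b)))
                    (Eadd (Escal (IZR (2 * a * b)) mu) (Escal (-2) lam))) (Psi k n) y
       = Psi k (n + 1)%Z y)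
  (HPsi_0 : asym_eq (fun k => Psi k 0%Z E0)
     (fun k => Cmul (Cmul (Cexpi (PI / 4)) (RtoC (Rpower (INR k / (2 * PI)) (/ 4))))
                    Om_lam)) :
  forall (i k : nat), (1 <= i <= 4)%nat -> (0 < k)%nat ->
    exists alpha : nat -> Cplx,
      (forall y : E,
         Cmul (qpow k (IZR (eps_i i)))
              (qinvM_pow k mu (- (a * b) + p_i a b i)%Z (Z0sec k (xi k)) y)
         = Csum (Z.to_nat (2 * a * b))
             (fun m => Cmul (alpha m)
                (Psi k (2 * Z.of_nat k * Z.of_nat m - a * b + p_i a b i)%Z y))) /\
      exists alpha0 : Cplx,
        inner_is kappa (Escal (IZR (2 * a * b)) mu) lam (Z0sec k (xi k)) (Psi k 0%Z) alpha0 /\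
        alpha 0%nat = Cmul alpha0
          (qpow k (- (IZR (a * a + b * b) / IZR (2 * a * b)) + IZR (2 * a * b) / 4)).
Proof.
  intros i k Hi Hk.
  assert (Hk' : INR k <> 0) by (apply not_0_INR; lia).
  set (D := (2 * a * b)%Z) in *.
  assert (HDpos : (0 < D)%Z) by (unfold D; apply Z.mul_pos; lia).
  set (Dr := IZR D).
  assert (HD : Dr <> 0) by (apply not_0_IZR; lia).
  set (DN := Z.to_nat D).
  assert (HDN : INR DN = Dr) by (unfold DN, Dr; rewrite INR_IZR_INZ, Z2Nat.id; [reflexivity|lia]).
  assert (HDN0 : (0 < DN)%nat) by (unfold DN; lia).
  assert (HS : forall n y, Tstar k (Escal (- / (2 * INR k * Dr)) lam) (Psi k n) y = Cmul (qpow k (IZR n / Dr)) (Psi k n y)).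
  { intros; apply HPsi_S; auto. }
  assert (HR : forall n y, Tstar k (Escal (/ (2 * INR k * Dr)) (Eadd (Escal Dr mu) (Escal (-2) lam))) (Psi k n) y = Psi k (n + 1)%Z y).
  { intros; apply HPsi_R; auto. }
  destruct (Hxi_onb k Hk) as [Xper [Xin _]].
  destruct (HPsi_onb k Hk) as [Pper [Pin [Porth Pcomp]]].
  assert (ZinH : inH k (Escal (IZR D) mu) lam (Z0sec k (xi k))).
  { split.
    - unfold Z0sec. apply hol_scal. apply hol_Csum. intros l _. apply (Xin _).
    - intros m n y. unfold Z0sec.
      rewrite Tstar_scal. f_equal.
      rewrite (Tstar_Csum k _ (2 * k) (fun l w => xi k (Z.of_nat l) w)).
      apply Csum_ext; intros l _.
      rewrite (Tstar_vec k _ (Eadd (Escal (IZR n) lam) (Escal (IZR (m * D)) mu))).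
      apply (Xin _). destruct lam, mu; unfold Eadd, Escal; cbn [fst snd]; rewrite mult_IZR; f_equal; ring. }
  destruct (Pcomp _ ZinH) as [c Hc].
  set (NN := Z.to_nat (2 * Z.of_nat k * D)) in *.
  assert (HNN : NN = (DN * (2 * k))%nat).
  { apply Nat2Z.inj. unfold NN, DN. rewrite Z2Nat.id by lia. rewrite !Nat2Z.inj_mul, Z2Nat.id by lia. simpl; ring. }
  assert (HL : forall y, Tstar k (Escal (- / (2 * INR k)) lam) (Z0sec k (xi k)) y = Cmul (qpow k 0) (Z0sec k (xi k) y)).
  { intros y. rewrite qpow_0, Cmul_1_l. unfold Z0sec. rewrite Tstar_scal. f_equal.
    rewrite (Tstar_Csum k _ (2 * k) (fun l w => xi k (Z.of_nat l) w)).
    rewrite (Csum_ext _ _ (fun l => xi k (Z.of_nat l - 1)%Z y)) by (intros; apply Hxi_L; auto).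
    replace (2 * k)%nat with (S (2 * k - 1)) by lia. rewrite Csum_shift.
    change (Csum (S (2 * k - 1)) ?f) with (Cadd (Csum (2 * k - 1) f) (f (2 * k - 1)%nat)).
    rewrite Cadd_comm. f_equal.
    - apply Csum_ext; intros. f_equal. lia.
    - rewrite <- (Xper (Z.of_nat 0 - 1)%Z y). f_equal. lia. }
  assert (Hsec : forall y, Z0sec k (xi k) y = secf (Psi k) NN c (fun l => Z.of_nat l) y) by (intros; apply Hc).
  assert (Hj : forall (j : nat) y, Z0sec k (xi k) y =
     Csum NN (fun l => Cmul (c l) (Cmul (qpow k (INR j * INR l)) (Psi k (Z.of_nat l) y)))).
  { intros j y. pose proof (S_pow k (/ (2 * INR k)) lam (Z0sec k (xi k)) 0 y HL j) as E.
    rewrite qpow_ext with (t := 0), qpow_0, Cmul_1_l in E by ring. rewrite <- E.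
    rewrite (Tstar_ext _ _ _ _ _ Hsec), Tstar_secf. apply Csum_ext; intros l _. f_equal.
    rewrite (Tstar_vec k _ (Escal (INR (j * DN) * - / (2 * INR k * Dr)) lam)).
    rewrite (S_pow k (/ (2 * INR k * Dr)) lam (Psi k (Z.of_nat l)) (IZR (Z.of_nat l) / Dr)).
    f_equal. apply qpow_ext. rewrite mult_INR, HDN, <- INR_IZR_INZ. field; auto.
    intros; apply HS.
    destruct lam; unfold Escal; cbn [fst snd]; rewrite mult_INR, HDN; f_equal; field; auto. }
  set (be := fun m => c (m * (2 * k))%nat). set (ell0 := fun m => Z.of_nat (m * (2 * k))).
  assert (HZ : Z0sec k (xi k) = secf (Psi k) DN be ell0).
  { apply functional_extensionality; intros y.
    apply (RtoC_cancel (INR (2 * k))). apply not_0_INR; lia.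
    rewrite <- Csum_const. rewrite (Csum_ext _ _ (fun j => Csum NN (fun l => Cmul (c l) (Cmul (qpow k (INR j * INR l)) (Psi k (Z.of_nat l) y))))) by (intros; apply Hj).
    rewrite Csum_swap.
    rewrite (Csum_ext NN _ (fun l => Cmul (Cmul (c l) (Csum (2*k) (fun j => qpow k (INR j * INR l)))) (Psi k (Z.of_nat l) y))).
    2:{ intros l _. rewrite Csum_mul, Csum_mul_r. apply Csum_ext; intros. cring. }
    rewrite (Csum_ext NN _ (fun l => if Nat.eqb (l mod (2*k)) 0 then Cmul (Cmul (c l) (RtoC (INR (2*k)))) (Psi k (Z.of_nat l) y) else C0)).
    2:{ intros; rewrite geo_sum by auto. destruct Nat.eqb; cring. }
    rewrite HNN, Csum_mult.
    2: lia.
    2:{ intros l Hl; apply Nat.eqb_neq in Hl; rewrite Hl; reflexivity. }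
    unfold secf. rewrite Csum_mul. apply Csum_ext; intros m _.
    replace ((m * (2*k)) mod (2*k))%nat with 0%nat by (symmetry; apply Nat.Div0.mod_mul).
    simpl Nat.eqb. unfold be, ell0. cring. }
  set (N := (- (a * b) + p_i a b i)%Z).
  exists (fun m => Cmul (qpow k (IZR (eps_i i))) (Cmul (be m) (qpow k (gph Dr (IZR (ell0 m)) (IZR N))))).
  split.
  - intros y. rewrite HZ. rewrite (qinvM_secf k Dr lam mu (Psi k) DN) by auto.
    unfold secf. rewrite Csum_mul. apply Csum_ext; intros m _. rewrite !Cmul_assoc. f_equal. f_equal.
    unfold ell0, N. rewrite !Nat2Z.inj_mul. simpl (Z.of_nat 2). ring.
  - exists (be 0%nat). split.
    + rewrite HZ. unfold secf.
      eapply inner_ext; [intros; reflexivity | |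
        apply (inner_Csum _ _ _ DN be (fun m => Psi k (ell0 m)) (Psi k 0%Z)
                 (fun m => if Z.eqb (ell0 m mod (2 * Z.of_nat k * D)) (0 mod (2 * Z.of_nat k * D)) then Defs.C1 else C0))].
      * rewrite Csum_delta; auto.
        -- unfold ell0. simpl. cring.
        -- intros m Hm. rewrite Z.mod_0_l by lia. rewrite Z.mod_small.
           ++ destruct (Z.eqb_spec (ell0 m) 0) as [E|E]. unfold ell0 in E; lia. cring.
           ++ unfold ell0. split. lia. assert (Hm2 : (m * (2 * k) < DN * (2 * k))%nat) by nia.
              rewrite <- HNN in Hm2. unfold NN in Hm2. apply Nat2Z.inj_lt in Hm2.
              rewrite Z2Nat.id in Hm2 by lia. exact Hm2.
      * intros m _. apply Porth.
    + rewrite (Cmul_comm (qpow k (IZR (eps_i i)))), <- Cmul_assoc, qpow_add.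
      f_equal. apply qpow_ext. unfold ell0. simpl (Z.of_nat (0 * (2 * k))).
      rewrite (Rplus_comm (gph _ _ _)). unfold Dr, N, D. apply phase_id; auto.
Qed.
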